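(* Let $\mu\ge1$. The prefix-average comparator for $\ge$ over $\{0,\dots,\mu\}$, i.e. the language of pairs $(A,B)$ of sequences in $\{0,\dots,\mu\}^\omega$ (read synchronously as words over $\{0,\dots,\mu\}^2$) with $\mathrm{PLA}(A)\ge\mathrm{PLA}(B)$, is not $\omega$-regular.
   Context: $\mathrm{Sum}(M[0,n-1])=\sum_{j=0}^{n-1}M[j]$. Prefix-average comparison: $\mathrm{PLA}(A)\ge\mathrm{PLA}(B)$ holds iff there are only finitely many indices $i$ with $\mathrm{Sum}(B[0,i-1])\ge\mathrm{Sum}(A[0,i-1])$ and infinitely many indices $i$ with $\mathrm{Sum}(A[0,i-1])>\mathrm{Sum}(B[0,i-1])$. *)

(* Defs.v *)
From mathcomp Require Import all_boot.
Set Implicit Arguments. Unset Strict Implicit. Unset Printing Implicit Defensive.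

Definition prefix_sum (M : nat -> nat) (n : nat) : nat := \sum_(j < n) M j.

Definition PLA_ge (A B : nat -> nat) : Prop :=
  (exists N, forall i, N <= i -> ~ (prefix_sum A i <= prefix_sum B i))
  /\ (forall N, exists i, N <= i /\ prefix_sum B i < prefix_sum A i).

Definition buchi_accepts (Sigma Q : finType) (init : pred Q)
  (delta : Q -> Sigma -> Q -> bool) (acc : pred Q) (w : nat -> Sigma) : Prop :=
  exists r : nat -> Q,
    init (r 0) /\ (forall i, delta (r i) (w i) (r i.+1)) /\
    (forall N, exists i, N <= i /\ acc (r i)).

Definition omega_regular (Sigma : finType) (L : (nat -> Sigma) -> Prop) : Prop :=
  exists (Q : finType) (init : pred Q) (delta : Q -> Sigma -> Q -> bool)
         (acc : pred Q),
    forall w, L w <-> buchi_accepts init delta acc w.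

Definition PLA_comparator (mu : nat) (w : nat -> 'I_mu.+1 * 'I_mu.+1) : Prop :=
  PLA_ge (fun i => nat_of_ord (w i).1) (fun i => nat_of_ord (w i).2).

(* Main.v *)
Require Import Defs.
From mathcomp Require Import all_boot.
From mathcomp Require Import zify.

Lemma ps0 M : prefix_sum M 0 = 0.
Proof. by rewrite /prefix_sum big_ord0. Qed.
Lemma psS M i : prefix_sum M i.+1 = prefix_sum M i + M i.
Proof. by rewrite /prefix_sum big_ord_recr. Qed.

Lemma ps_const M p c k : (forall j, p <= j -> j < p + k -> M j = c) ->
  prefix_sum M (p+k) = prefix_sum M p + k*c.
Proof.
elim: k => [|k IH] H; first by rewrite addn0 mul0n addn0.
rewrite addnS psS IH; last by move=> j h1 h2; apply: H; lia.
rewrite (H (p + k)); lia.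
Qed.

Lemma ps_ext M M' q : (forall j, j < q -> M' j = M j) -> prefix_sum M' q = prefix_sum M q.
Proof. move=> H; rewrite /prefix_sum; apply: eq_bigr => j _; exact: H. Qed.

Lemma ps_shift M M' p q : p <= q -> (forall j, j < q -> M' j = M j) ->
  (forall j, q <= j -> M' j = M (j - (q - p))) -> forall k,
  prefix_sum M' (q + k) + prefix_sum M p = prefix_sum M (p + k) + prefix_sum M q.
Proof.
move=> hpq h1 h2; elim=> [|k IH]; first by rewrite !addn0 (@ps_ext M M' q h1) addnC.
rewrite !addnS !psS h2; last lia.
have -> : q + k - (q - p) = p + k by lia.
lia.
Qed.

Definition ltr mu (x : bool) : 'I_mu.+1 * 'I_mu.+1 :=
  if x then (inord 1, ord0) else (ord0, inord 1).
Lemma ltr1 mu x : 1 <= mu -> nat_of_ord (ltr mu x).1 = x.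
Proof. by case: x => h //=; rewrite inordK. Qed.
Lemma ltr2 mu x : 1 <= mu -> nat_of_ord (ltr mu x).2 = ~~ x.
Proof. by case: x => h //=; rewrite inordK. Qed.

Definition gw K i := (i <= K) || ((K + K < i) && odd (i - (K + K))).
Definition PA K n := prefix_sum (fun j => nat_of_bool (gw K j)) n.
Definition PB K n := prefix_sum (fun j => nat_of_bool (~~ gw K j)) n.

Lemma G2 K j : K < j -> j <= K + K -> gw K j = false.
Proof.
move=> h1 h2; rewrite /gw.
have -> : (j <= K) = false by apply/negbTE; rewrite -ltnNge.
have -> : (K + K < j) = false by apply/negbTE; rewrite -leqNgt.
done.
Qed.

Lemma L1 K i : i <= K.+1 -> PA K i = i /\ PB K i = 0.
Proof.
elim: i => [|i IH] hi; first by rewrite /PA /PB !ps0.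
rewrite /PA /PB !psS -/(PA K i) -/(PB K i).
have [-> ->] := IH (ltnW hi).
have gi : gw K i by rewrite /gw (_ : i <= K) //.
by rewrite gi /=; lia.
Qed.

Lemma L2 K k : k <= K -> PA K (K.+1 + k) = K.+1 /\ PB K (K.+1 + k) = k.
Proof.
elim: k => [|k IH] hk.
  by rewrite addn0; have [-> ->] := @L1 K K.+1 (leqnn K.+1).
rewrite addnS /PA /PB (psS _ (K.+1 + k)) (psS _ (K.+1 + k)) -/(PA K (K.+1 + k)) -/(PB K (K.+1 + k)).
have [-> ->] := IH (ltnW hk).
rewrite G2 /=; lia.
Qed.

Lemma L3 K m : PA K (K.+1 + K + m) = PB K (K.+1 + K + m) + 1 + odd m.
Proof.
elim: m => [|m IH].
  by rewrite addn0; have [-> ->] := @L2 K K (leqnn K); lia.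
rewrite addnS /PA /PB (psS _ (K.+1 + K + m)) (psS _ (K.+1 + K + m)) -/(PA K (K.+1 + K + m)) -/(PB K (K.+1 + K + m)).
have -> : gw K (K.+1 + K + m) = odd m.+1.
  rewrite /gw.
  have -> : (K.+1 + K + m <= K) = false by apply/negbTE; rewrite -ltnNge; lia.
  have -> : (K + K < K.+1 + K + m) = true by apply/idP; lia.
  by have -> : K.+1 + K + m - (K + K) = m.+1 by lia.
rewrite IH /=; case: (odd m) => /=; lia.
Qed.

Lemma F1 K i : 0 < i -> PB K i < PA K i.
Proof.
move=> h0.
case: (leqP i K.+1) => h.
  by have [-> ->] := @L1 K i h.
case: (leqP i (K.+1 + K)) => h'.
  have := @L2 K (i - K.+1) ltac:(lia).
  rewrite subnKC; last lia.
  by move=> [-> ->]; lia.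
have := L3 K (i - (K.+1 + K)).
rewrite subnKC; last lia.
lia.
Qed.

Lemma F2 K N : exists i, N <= i /\ PA K i = (PB K i).+1.
Proof.
exists (K.+1 + K + (N + N)); split; first lia.
by rewrite L3 addnn odd_double; lia.
Qed.

Theorem theorem19 (mu : nat) (hmu : 1 <= mu) :
  ~ omega_regular (@PLA_comparator mu).
Proof.
move=> [Q [init [delta [acc H]]]].
set K := #|Q|.
pose w i := ltr mu (gw K i).
have eA n : prefix_sum (fun i => nat_of_ord (w i).1) n = PA K n.
  by rewrite /prefix_sum; apply: eq_bigr => j _; rewrite /w ltr1.
have eB n : prefix_sum (fun i => nat_of_ord (w i).2) n = PB K n.
  by rewrite /prefix_sum; apply: eq_bigr => j _; rewrite /w ltr2.
have Hw : PLA_comparator w.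
  rewrite /PLA_comparator /PLA_ge; split.
    exists 1 => i hi; rewrite eA eB; apply/negP; rewrite -ltnNge; exact: F1.
  move=> N; have [i [h1 h2]] := F2 K N.
  by exists i; rewrite eA eB h2; split.
have [r [rinit [rstep racc]]] := (H w).1 Hw.
pose f (j : 'I_K.+1) := r (K.+1 + j).
have : ~~ injectiveb f.
  apply/negP => /injectiveP inj; have := @leq_card _ _ f inj; rewrite card_ord; lia.
move/injectivePn => [j1 [j2 hne heq]].
have [p [q [hpq [hp [hq hr]]]]] :
    exists p q, p < q /\ K.+1 <= p /\ q <= K.+1 + K /\ r p = r q.
  case: (ltngtP j1 j2) => h.
  - exists (K.+1 + j1), (K.+1 + j2); have := ltn_ord j2.
    by move=> ?; do !split; try lia; exact: heq.
  - exists (K.+1 + j2), (K.+1 + j1); have := ltn_ord j1.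
    by move=> ?; do !split; try lia; symmetry; exact: heq.
  - by move: hne; rewrite (val_inj h) eqxx.
pose w' i := if i < q then w i else w (i - (q - p)).
pose r' i := if i < q then r i else r (i - (q - p)).
have Hw' : buchi_accepts init delta acc w'.
  exists r'; split; [|split].
  - by rewrite /r' (_ : 0 < q) //; lia.
  - move=> i; rewrite /r' /w'.
    case: (ltnP i q) => hi.
      case: (ltnP i.+1 q) => hi'; first exact: rstep.
      have -> : i.+1 - (q - p) = p by lia.
      rewrite hr (_ : q = i.+1); [exact: rstep | lia].
    have -> : (i.+1 < q) = false by apply/negbTE; rewrite -leqNgt; lia.
    have -> : i.+1 - (q - p) = (i - (q - p)).+1 by lia.
    exact: rstep.
  - move=> N; have [i [hi ha]] := racc (N + q).
    exists (i + (q - p)); split; first lia.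
    rewrite /r'.
    have -> : (i + (q - p) < q) = false by apply/negbTE; rewrite -leqNgt; lia.
    by rewrite (_ : i + (q - p) - (q - p) = i) //; lia.
have [[N hN] _] := (H w').2 Hw'.
pose MA i := nat_of_ord (w i).1.
pose MB i := nat_of_ord (w i).2.
have sh1 j : j < q -> nat_of_ord (w' j).1 = MA j by move=> hj; rewrite /w' hj.
have sh2 j : q <= j -> nat_of_ord (w' j).1 = MA (j - (q - p)).
  by move=> hj; rewrite /w' (_ : (j < q) = false) //; apply/negbTE; rewrite -leqNgt.
have sh3 j : j < q -> nat_of_ord (w' j).2 = MB j by move=> hj; rewrite /w' hj.
have sh4 j : q <= j -> nat_of_ord (w' j).2 = MB (j - (q - p)).
  by move=> hj; rewrite /w' (_ : (j < q) = false) //; apply/negbTE; rewrite -leqNgt.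
have SA := @ps_shift MA (fun j => nat_of_ord (w' j).1) p q (ltnW hpq) sh1 sh2.
have SB := @ps_shift MB (fun j => nat_of_ord (w' j).2) p q (ltnW hpq) sh3 sh4.
have CA : prefix_sum MA q = prefix_sum MA p + (q - p) * 0.
  rewrite -{1}(subnKC (ltnW hpq)); apply: ps_const => j h1 h2.
  by rewrite /MA /w ltr1 // G2 //; lia.
have CB : prefix_sum MB q = prefix_sum MB p + (q - p) * 1.
  rewrite -{1}(subnKC (ltnW hpq)); apply: ps_const => j h1 h2.
  by rewrite /MB /w ltr2 // G2 //; lia.
have [i [hi1 hi2]] := F2 K (N + p).
have := SA (i - p); have := SB (i - p).
rewrite (subnKC (_ : p <= i)); last lia.
have e1 : prefix_sum MA i = PA K i by exact: eA.
have e2 : prefix_sum MB i = PB K i by exact: eB.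
rewrite e1 e2 CA CB => hb ha.
have := hN (q + (i - p)) ltac:(lia).
lia.
Qed.
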